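(* Let $a>0$ and $x_0=\frac{a}{a+1}$. For every $x\in[0,1]$ the series $$1-\sum_{n\ge1}(an)_{n-1}\frac{\bigl(x^a(1-x)\bigr)^n}{n!}$$ converges absolutely, and its value equals $g_a(x)$. Consequently this series equals $f_a(x)$ for $0\le x\le x_0$ and equals $x$ for $x_0\le x\le1$.
   Context: For $c$ real and integer $n$, $(c)_n=\Gamma(c+n)/\Gamma(c)$ is the Pochhammer symbol; in particular $(an)_{n-1}=\Gamma(an+n-1)/\Gamma(an)$ for $n\ge1$. For $a>0$ let $\phi_a(x)=x^a-x^{a+1}$ on $[0,1]$; it is strictly increasing on $[0,x_0]$ and strictly decreasing on $[x_0,1]$ with $x_0=a/(a+1)$. Let $l_a,r_a$ be the restrictions of $\phi_a$ to $[0,x_0]$ and $[x_0,1]$. Define $f_a(x)=r_a^{-1}(\phi_a(x))$ for $0\le x\le x_0$, $f_a(x)=l_a^{-1}(\phi_a(x))$ for $x_0\le x\le 1$ (the unique involution with $\phi_a\circ f_a=\phi_a$, $f_a\ne\mathrm{id}$ off $x_0$), and $g_a(x)=r_a^{-1}(\phi_a(x))$ for $0\le x\le1$. *)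

(* Defs.v *)
From Stdlib Require Import Reals Lra ClassicalEpsilon.
From Coquelicot Require Import Coquelicot.
Open Scope R_scope.

Fixpoint poch (c : R) (m : nat) : R :=
  match m with
  | O => 1
  | S k => poch c k * (c + INR k)
  end.

(* real power x^a for x >= 0, with the convention 0^a = 0 (a > 0). *)
Definition rpow (x a : R) : R :=
  if Req_EM_T x 0 then 0 else Rpower x a.

Definition phi (a x : R) : R := rpow x a - rpow x (a + 1).

Definition x0 (a : R) : R := a / (a + 1).

Definition r_inv (a t : R) : R :=
  epsilon (inhabits 0) (fun y => x0 a <= y <= 1 /\ phi a y = t).

Definition l_inv (a t : R) : R :=
  epsilon (inhabits 0) (fun y => 0 <= y <= x0 a /\ phi a y = t).

Definition f_a (a x : R) : R :=
  if Rle_dec x (x0 a) then r_inv a (phi a x) else l_inv a (phi a x).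

Definition g_a (a x : R) : R := r_inv a (phi a x).

Definition term (a x : R) (n : nat) : R :=
  poch (a * INR n) (n - 1) * (rpow x a * (1 - x)) ^ n / INR (Factorial.fact n).

(* Main.v *)
Require Import Defs.
From Stdlib Require Import Reals Lra Lia ClassicalEpsilon.
From Coquelicot Require Import Coquelicot.
Open Scope R_scope.

Fixpoint ff (c : R) (m : nat) : R :=
  match m with O => 1 | S k => ff c k * (c - INR k) end.

Lemma ff_S' c k : ff c (S k) = c * ff (c-1) k.
Proof.
  induction k as [|k IH].
  - simpl. ring.
  - change (ff c (S (S k))) with (ff c (S k) * (c - INR (S k))).
    rewrite IH. change (ff (c-1) (S k)) with (ff (c-1) k * (c - 1 - INR k)).
    rewrite S_INR. ring.
Qed.

Lemma ff_ext c d m : c = d -> ff c m = ff d m.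
Proof. intros ->; reflexivity. Qed.

Lemma INR_fact_pos n : 0 < INR (Factorial.fact n).
Proof. apply lt_0_INR, Factorial.lt_O_fact. Qed.

Lemma INR_fact_S n : INR (Factorial.fact (S n)) = INR (S n) * INR (Factorial.fact n).
Proof. change (Factorial.fact (S n)) with (S n * Factorial.fact n)%nat. apply mult_INR. Qed.

Definition fb s y n := ff (y + s * INR n) n / INR (Factorial.fact n).
Definition gb s x n := match n with O => 1 | S m => x * ff (x + s*INR n - 1) m / INR (Factorial.fact n) end.

Lemma fb_diff s z m : fb s z (S m) - fb s (z-1) (S m) = fb s (z + s - 1) m.
Proof.
  unfold fb. rewrite ff_S'.
  change (ff (z - 1 + s * INR (S m)) (S m)) with
     (ff (z - 1 + s * INR (S m)) m * (z - 1 + s * INR (S m) - INR m)).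
  rewrite (ff_ext (z + s * INR (S m) - 1) (z + s - 1 + s * INR m)) by (rewrite S_INR; ring).
  rewrite (ff_ext (z - 1 + s * INR (S m)) (z + s - 1 + s * INR m)) by (rewrite S_INR; ring).
  rewrite INR_fact_S. pose proof (INR_fact_pos m). rewrite S_INR in *.
  field. split; [lra|]. pose proof (pos_INR m). lra.
Qed.

Lemma gb_diff s x k : gb s x (S k) - gb s (x-1) (S k) = gb s (x + s - 1) k.
Proof.
  destruct k as [|m].
  - simpl. field.
  - unfold gb. rewrite ff_S'.
    change (ff (x - 1 + s * INR (S (S m)) - 1) (S m)) with
      (ff (x - 1 + s * INR (S (S m)) - 1) m * (x - 1 + s * INR (S (S m)) - 1 - INR m)).
    rewrite (ff_ext (x + s * INR (S (S m)) - 1 - 1) (x + s - 1 + s * INR (S m) - 1)) by (rewrite !S_INR; ring).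
    rewrite (ff_ext (x - 1 + s * INR (S (S m)) - 1) (x + s - 1 + s * INR (S m) - 1)) by (rewrite !S_INR; ring).
    rewrite (INR_fact_S (S m)). pose proof (INR_fact_pos (S m)). rewrite !S_INR in *.
    field. split; [lra|]. pose proof (pos_INR m). lra.
Qed.

Inductive Poly : nat -> (R -> R) -> Prop :=
| Poly0 : forall (c : R) (f : R -> R), (forall x, f x = c) -> Poly 0 f
| PolyS : forall n c q f, Poly n q -> (forall x, f x = c + x * q x) -> Poly (S n) f.

Lemma Poly_ext n f g : Poly n f -> (forall x, g x = f x) -> Poly n g.
Proof.
  intros H E; destruct H as [c f Hf|n c q f Hq Hf].
  - apply (Poly0 c); intros; rewrite E; auto.
  - apply (PolyS n c q); auto. intros; rewrite E; auto.
Qed.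

Lemma Poly_const n c : Poly n (fun _ => c).
Proof.
  revert c; induction n; intros c. - apply (Poly0 c); auto.
  - apply (PolyS n c (fun _ => 0)). apply IHn.
    intros; ring.
Qed.

Lemma Poly_S n f : Poly n f -> Poly (S n) f.
Proof.
  induction 1 as [c f Hf|n c q f Hq IH Hf].
  - apply (PolyS 0 c (fun _ => 0)). apply (Poly0 0); auto. intros; rewrite Hf; ring.
  - apply (PolyS (S n) c q); auto.
Qed.

Lemma Poly_le n m f : (n <= m)%nat -> Poly n f -> Poly m f.
Proof. induction 1; auto. intros; apply Poly_S; auto. Qed.

Lemma Poly_add n f g : Poly n f -> Poly n g -> Poly n (fun x => f x + g x).
Proof.
  intros H; revert g; induction H as [c f Hf|n c q f Hq IH Hf]; intros g Hg.
  - inversion Hg as [c0 g' Hg0|]; subst. apply (Poly0 (c + c0)). intros; rewrite Hf, Hg0; auto.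
  - inversion Hg as [|n' c0 q0 g' Hq0 Hg0]; subst. apply (PolyS n (c + c0) (fun x => q x + q0 x)).
    apply IH; auto. intros; rewrite Hf, Hg0; ring.
Qed.

Lemma Poly_scal n k f : Poly n f -> Poly n (fun x => k * f x).
Proof.
  induction 1 as [c f Hf|n c q f Hq IH Hf].
  - apply (Poly0 (k*c)); intros; rewrite Hf; auto.
  - apply (PolyS n (k*c) (fun x => k * q x)); auto. intros; rewrite Hf; ring.
Qed.

Lemma Poly_mulX n d f : Poly n f -> Poly (S n) (fun x => f x * (x + d)).
Proof.
  induction 1 as [c f Hf|n c q f Hq IH Hf].
  - apply (PolyS 0 (c*d) (fun _ => c)). apply (Poly0 c); auto. intros; rewrite Hf; ring.
  - apply (PolyS (S n) (c*d) (fun x => c + q x * (x + d))).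
    + apply (Poly_add (S n) (fun _ => c)); auto. apply Poly_const.
    + intros; rewrite Hf; ring.
Qed.

Lemma Poly_shift n d f : Poly n f -> Poly n (fun x => f (x + d)).
Proof.
  induction 1 as [c f Hf|n c q f Hq IH Hf].
  - apply (Poly0 c); auto.
  - apply (Poly_ext (S n) (fun x => c + q (x + d) * (x + d))).
    + apply (Poly_add (S n) (fun _ => c)). apply Poly_const. apply Poly_mulX; auto.
    + intros; rewrite Hf; ring.
Qed.

Lemma Poly_sum n F N : (forall k, (k <= N)%nat -> Poly n (F k)) ->
  Poly n (fun x => sum_f_R0 (fun k => F k x) N).
Proof.
  induction N; intros H; simpl.
  - apply (Poly_ext n (F 0%nat)); auto.
  - apply (Poly_add n (fun x => sum_f_R0 (fun k => F k x) N)); auto.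
Qed.

Lemma Poly_root n : forall f, Poly n f -> (forall j, (j <= n)%nat -> f (INR j) = 0) ->
  forall x, f x = 0.
Proof.
  induction n as [|n IH]; intros f Hp Hz x.
  - inversion Hp as [c f' H|]; subst. rewrite H. rewrite <- (H (INR 0)). apply Hz; auto.
  - inversion Hp as [|n' c q f' H1 H3]; subst.
    assert (Hc : c = 0).
    { specialize (Hz 0%nat ltac:(lia)). rewrite H3 in Hz. simpl in Hz. lra. }
    assert (Hq' : forall y, q (y + 1) = 0).
    { intro y.
      apply (IH (fun y => q (y + 1)) (Poly_shift n 1 q H1)). intros j Hj.
      specialize (Hz (S j) ltac:(lia)). rewrite H3, Hc, S_INR in Hz.
      pose proof (pos_INR j).
      rewrite Rplus_0_l in Hz. apply Rmult_integral in Hz. destruct Hz; auto. lra. }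
    rewrite H3, Hc. replace x with ((x - 1) + 1) by ring. rewrite Hq'. ring.
Qed.

Lemma Poly_ff d k : Poly k (fun x => ff (x + d) k).
Proof.
  revert d; induction k; intros d.
  - apply (Poly0 1); auto.
  - apply (Poly_ext (S k) (fun x => ff (x + d) k * (x + (d - INR k)))).
    + apply Poly_mulX; auto.
    + intros; simpl; ring.
Qed.

Lemma Poly_gb s k : Poly k (fun x => gb s x k).
Proof.
  destruct k as [|m].
  - apply (Poly0 1); auto.
  - apply (Poly_ext (S m) (fun x => / INR (Factorial.fact (S m)) * (ff (x + (s * INR (S m) - 1)) m * (x + 0)))).
    + apply Poly_scal, Poly_mulX, Poly_ff.
    + intros x; unfold gb. rewrite (ff_ext (x + s * INR (S m) - 1) (x + (s * INR (S m) - 1))) by ring.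
      unfold Rdiv. ring.
Qed.

Lemma sum_zero N : sum_f_R0 (fun _ => 0) N = 0.
Proof. induction N; simpl; [auto| rewrite IHN; ring]. Qed.

Lemma rothe s n : forall x y,
  sum_f_R0 (fun k => gb s x k * fb s y (n - k)) n = fb s (x + y) n.
Proof.
  induction n as [|m IH]; intros x y.
  - simpl. unfold fb. simpl. field.
  - set (H := fun x => sum_f_R0 (fun k => gb s x k * fb s y (S m - k)) (S m) - fb s (x + y) (S m)).
    assert (HD : forall x, H x - H (x - 1) = 0).
    { intro z. unfold H.
      replace (z - 1 + y) with (z + y - 1) by ring.
      pose proof (fb_diff s (z + y) m) as Hf.
      assert (E : sum_f_R0 (fun k => gb s z k * fb s y (S m - k)) (S m)
                 - sum_f_R0 (fun k => gb s (z-1) k * fb s y (S m - k)) (S m)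
                 = fb s (z + y + s - 1) m).
      { rewrite <- (minus_sum (fun k => gb s z k * fb s y (S m - k))
                   (fun k => gb s (z-1) k * fb s y (S m - k))) .
        rewrite decomp_sum by lia. simpl pred.
        rewrite (sum_eq _ (fun k => gb s (z + s - 1) k * fb s y (m - k))).
        2:{ intros i Hi. rewrite <- gb_diff. replace (S m - S i)%nat with (m - i)%nat by lia. ring. }
        rewrite IH. simpl gb.
        replace (z + s - 1 + y) with (z + y + s - 1) by ring. ring. }
      lra. }
    assert (H0 : H 0 = 0).
    { unfold H. rewrite decomp_sum by lia. simpl pred.
      rewrite (sum_eq _ (fun _ => 0)). 2:{ intros i Hi. unfold gb. unfold Rdiv. ring. }
      rewrite sum_zero, Rplus_0_l. simpl gb. replace (S m - 0)%nat with (S m) by lia. ring. }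
    assert (HN : forall j, H (INR j) = 0).
    { induction j. simpl; auto. rewrite S_INR. specialize (HD (INR j + 1)).
      replace (INR j + 1 - 1) with (INR j) in HD by ring. lra. }
    assert (HP : Poly (S m) H).
    { unfold H. apply (Poly_ext (S m) (fun x =>
        sum_f_R0 (fun k => (fun k x => fb s y (S m - k) * gb s x k) k x) (S m) + (-1) * fb s (x + y) (S m))).
      2:{ intros z. cbv beta. rewrite (sum_eq (fun k => gb s z k * fb s y (S m - k)) (fun k => fb s y (S m - k) * gb s z k)) by (intros; ring). ring. }
      apply Poly_add.
      - apply Poly_sum. intros k Hk. apply Poly_scal. apply (Poly_le k). auto. apply Poly_gb.
      - apply Poly_scal. unfold fb.
        apply (Poly_ext (S m) (fun x => / INR (Factorial.fact (S m)) * ff (x + (y + s * INR (S m))) (S m))).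
        + apply Poly_scal, Poly_ff.
        + intros z. rewrite (ff_ext (z + y + s * INR (S m)) (z + (y + s * INR (S m)))) by ring.
          unfold Rdiv; ring. }
    pose proof (Poly_root (S m) H HP (fun j _ => HN j) x) as Hx.
    unfold H in Hx. lra.
Qed.

Definition cf (a : R) (n : nat) : R :=
  match n with O => 0 | S m => poch (a * INR (S m)) m / INR (Factorial.fact (S m)) end.

Lemma poch_ff c m : poch c m = ff (c + INR m - 1) m.
Proof.
  induction m as [|m IH].
  - reflexivity.
  - simpl poch. rewrite IH, ff_S'. rewrite S_INR.
    rewrite (ff_ext (c + (INR m + 1) - 1 - 1) (c + INR m - 1)) by ring. ring.
Qed.

Lemma cf_gb a m : cf a (S m) = - gb (a+1) (-1) (S m).
Proof.
  unfold cf, gb. rewrite poch_ff.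
  rewrite (ff_ext (-1 + (a+1) * INR (S m) - 1) (a * INR (S m) + INR m - 1)) by (rewrite S_INR; ring).
  unfold Rdiv; ring.
Qed.

Lemma cf_fb1 a m : fb (a+1) (-1) (S m) = ((a+1) * INR (S m) - 1) * cf a (S m).
Proof.
  unfold cf, fb. rewrite poch_ff, ff_S'.
  rewrite (ff_ext (-1 + (a+1) * INR (S m) - 1) (a * INR (S m) + INR m - 1)) by (rewrite S_INR; ring).
  unfold Rdiv; ring.
Qed.

Lemma cf_fb2 a m : fb (a+1) (-2) (S m) = (a * INR (S m) - 1) * cf a (S m).
Proof.
  unfold cf, fb. rewrite poch_ff. change (ff (-2 + (a + 1) * INR (S m)) (S m)) with (ff (-2 + (a + 1) * INR (S m)) m * (-2 + (a + 1) * INR (S m) - INR m)).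
  rewrite (ff_ext (-2 + (a+1) * INR (S m)) (a * INR (S m) + INR m - 1)) by (rewrite S_INR; ring).
  rewrite S_INR. unfold Rdiv. ring.
Qed.

Lemma sum_ind0 N X : sum_f_R0 (fun k => if Nat.eqb k 0 then X else 0) N = X.
Proof. induction N; simpl; [auto| rewrite IHN; ring]. Qed.

Lemma sum_indN N X : sum_f_R0 (fun k => if Nat.eqb k N then X else 0) N = X.
Proof.
  destruct N as [|m]. - reflexivity.
  - rewrite tech5. rewrite (sum_eq _ (fun _ => 0)).
    + rewrite sum_zero, Nat.eqb_refl. ring.
    + intros i Hi. destruct (Nat.eqb_spec i (S m)); [lia|auto].
Qed.

Lemma ode_coef a n :
  sum_f_R0 (fun k => cf a k * (((a+1) * INR (n - k) - 1) * cf a (n - k))) n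
  = (INR n - 1) * cf a n.
Proof.
  destruct n as [|m].
  - simpl. ring.
  - pose proof (rothe (a+1) (S m) (-1) (-1)) as HR.
    replace (-1 + -1) with (-2) in HR by ring.
    rewrite (sum_eq _ (fun k => - (cf a k * (((a+1) * INR (S m - k) - 1) * cf a (S m - k)))
         + (if Nat.eqb k 0 then fb (a+1) (-1) (S m) else 0)
         - (if Nat.eqb k (S m) then cf a (S m) else 0))) in HR.
    2:{ intros k Hk. destruct k as [|i].
        - simpl. ring.
        - destruct (Nat.eqb_spec (S i) (S m)) as [E|E].
          + rewrite E, Nat.sub_diag. replace (fb (a+1) (-1) 0) with 1 by (unfold fb; simpl; field). replace (gb (a+1) (-1) (S m)) with (- cf a (S m)) by (rewrite cf_gb; ring). change (cf a 0) with 0. simpl Nat.eqb. cbv iota. ring.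
          + destruct (S m - S i)%nat as [|j] eqn:Ej; [lia|].
            rewrite cf_fb1, !cf_gb. simpl Nat.eqb. cbv iota. ring. }
    rewrite minus_sum, plus_sum, sum_ind0, sum_indN in HR.
    rewrite (sum_eq (fun k => - _) (fun k => (cf a k * (((a+1) * INR (S m - k) - 1) * cf a (S m - k))) * -1)) in HR by (intros; ring).
    rewrite <- scal_sum in HR.
    rewrite cf_fb1, cf_fb2 in HR. rewrite S_INR in *. lra.
Qed.
Definition hh (a w : R) := w * Rpower (1 - w) a.
Lemma hh_der a w : w < 1 -> is_derive (hh a) w (Rpower (1 - w) (a - 1) * (1 - (a+1) * w)).
Proof.
  intros Hw. unfold hh, Rpower. auto_derive.
  - lra.
  - replace ((a - 1) * ln (1 - w)) with (a * ln (1 - w) + - ln (1 - w)) by ring.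
    rewrite exp_plus, exp_Ropp, exp_ln by lra.
    replace (1 + - w) with (1 - w) by ring. field. lra.
Qed.

Lemma Rpower_pred x a : 0 < x -> Rpower x a = Rpower x (a - 1) * x.
Proof.
  intros Hx. rewrite <- (Rpower_1 x Hx) at 3. rewrite <- Rpower_plus. f_equal. ring.
Qed.

Lemma Rpower_base1 y : Rpower 1 y = 1.
Proof. unfold Rpower. rewrite ln_1, Rmult_0_r. apply exp_0. Qed.

Lemma Rpower_pos x y : 0 < Rpower x y.
Proof. unfold Rpower. apply exp_pos. Qed.

Lemma K_der a F dF u : 0 < u -> F u < 1 -> is_derive F u (dF u) ->
  is_derive (fun v => hh a (F v) / v) u
    (Rpower (1 - F u) (a - 1) * (u * dF u * (1 - (a+1) * F u) - F u * (1 - F u)) / (u * u)).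
Proof.
  intros Hu HF HdF.
  pose proof (is_derive_comp (hh a) F u _ _ (hh_der a (F u) HF) HdF) as H1.
  pose proof (is_derive_div (fun v => hh a (F v)) (fun v => v) u _ 1 H1 (is_derive_id u)) as H2.
  assert (Hne : u <> 0) by lra. specialize (H2 Hne).
  eapply is_derive_ext; [intros; reflexivity|].
  match type of H2 with is_derive _ _ ?v => replace (Rpower (1 - F u) (a - 1) * (u * dF u * (1 - (a+1) * F u) - F u * (1 - F u)) / (u * u)) with v end.
  exact H2.
  unfold hh. rewrite (Rpower_pred (1 - F u) a) by lra.
  change (scal (dF u) (Rpower (1 - F u) (a - 1) * (1 - (a + 1) * F u))) with
    (dF u * (Rpower (1 - F u) (a - 1) * (1 - (a + 1) * F u))).
  field. auto.
Qed.

Lemma hh_lim0 a F dF : F 0 = 0 -> dF 0 = 1 -> is_derive F 0 (dF 0) ->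
  forall eps, 0 < eps -> exists del, 0 < del /\
    forall u, 0 < u < del -> Rabs (hh a (F u) / u - 1) < eps.
Proof.
  intros H0 H1 Hd eps Heps.
  assert (HF : F 0 < 1) by lra.
  pose proof (is_derive_comp (hh a) F 0 _ _ (hh_der a (F 0) HF) Hd) as H2.
  change (scal (dF 0) (Rpower (1 - F 0) (a - 1) * (1 - (a + 1) * F 0))) with
    (dF 0 * (Rpower (1 - F 0) (a - 1) * (1 - (a + 1) * F 0))) in H2.
  rewrite H0, H1 in H2. replace (1 - 0) with 1 in H2 by ring. rewrite Rpower_base1 in H2.
  replace (1 * (1 * (1 - (a + 1) * 0))) with 1 in H2 by ring.
  apply is_derive_Reals in H2.
  destruct (H2 eps Heps) as [del Hdel].
  exists del. split. apply cond_pos.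
  intros u Hu. assert (Hu0 : u <> 0) by lra.
  assert (Hua : Rabs u < del) by (rewrite Rabs_pos_eq; lra).
  specialize (Hdel u Hu0 Hua). rewrite Rplus_0_l, H0 in Hdel.
  unfold hh at 2 in Hdel. rewrite Rmult_0_l, Rminus_0_r in Hdel. exact Hdel.
Qed.

Definition Kd a F dF u :=
  Rpower (1 - F u) (a - 1) * (u * dF u * (1 - (a+1) * F u) - F u * (1 - F u)) / (u * u).

Lemma K_mvt a F dF u t : 0 < u < t ->
  (forall v, 0 <= v <= t -> is_derive F v (dF v)) ->
  (forall v, 0 <= v <= t -> F v < 1) ->
  exists c, u < c < t /\ hh a (F t) / t - hh a (F u) / u = Kd a F dF c * (t - u).
Proof.
  intros Hu Hd H1.
  destruct (MVT_cor2 (fun v => hh a (F v) / v) (Kd a F dF) u t) as [c [Hc1 Hc2]].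
  - lra.
  - intros c Hc. apply is_derive_Reals. apply K_der; [lra| apply H1; lra| apply Hd; lra].
  - exists c. split; [lra|auto].
Qed.

Lemma key_le a F dF t : 0 < t ->
  (forall u, 0 <= u <= t -> is_derive F u (dF u)) ->
  F 0 = 0 -> dF 0 = 1 ->
  (forall u, 0 <= u <= t -> F u < 1) ->
  (forall u, 0 < u <= t -> u * dF u * (1 - (a+1) * F u) <= F u * (1 - F u)) ->
  hh a (F t) <= t.
Proof.
  intros Ht Hd H0 H1 Hlt Hode.
  assert (Hm : forall u, 0 < u < t -> hh a (F t) / t <= hh a (F u) / u).
  { intros u Hu. destruct (K_mvt a F dF u t Hu Hd Hlt) as [c [Hc Heq]].
    assert (Kd a F dF c <= 0).
    { unfold Kd. unfold Rdiv. apply Rmult_le_0_r.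
      - apply Rmult_le_0_l. left; apply Rpower_pos. specialize (Hode c ltac:(lra)). lra.
      - left. apply Rinv_0_lt_compat. nra. }
    nra. }
  destruct (Rle_or_lt (hh a (F t) / t) 1) as [Hk|Hk].
  - apply Rmult_le_compat_r with (r := t) in Hk; [|lra].
    unfold Rdiv in Hk. rewrite Rmult_assoc, Rinv_l, Rmult_1_r, Rmult_1_l in Hk by lra. exact Hk.
  - exfalso. destruct (hh_lim0 a F dF H0 H1 (Hd 0 ltac:(lra)) (hh a (F t) / t - 1) ltac:(lra)) as [del [Hdel Hl]].
    set (u := Rmin del t / 2).
    assert (Hu : 0 < u < t /\ u < del).
    { unfold u. pose proof (Rmin_l del t). pose proof (Rmin_r del t).
      assert (0 < Rmin del t) by (apply Rmin_glb_lt; lra). lra. }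
    specialize (Hl u ltac:(lra)). specialize (Hm u ltac:(lra)).
    apply Rabs_def2 in Hl. lra.
Qed.

Lemma key_ge a F dF t : 0 < t ->
  (forall u, 0 <= u <= t -> is_derive F u (dF u)) ->
  F 0 = 0 -> dF 0 = 1 ->
  (forall u, 0 <= u <= t -> F u < 1) ->
  (forall u, 0 < u <= t -> u * dF u * (1 - (a+1) * F u) >= F u * (1 - F u)) ->
  hh a (F t) >= t.
Proof.
  intros Ht Hd H0 H1 Hlt Hode.
  assert (Hm : forall u, 0 < u < t -> hh a (F t) / t >= hh a (F u) / u).
  { intros u Hu. destruct (K_mvt a F dF u t Hu Hd Hlt) as [c [Hc Heq]].
    assert (Kd a F dF c >= 0).
    { unfold Kd. unfold Rdiv. apply Rle_ge. apply Rmult_le_pos.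
      - apply Rmult_le_pos. left; apply Rpower_pos. specialize (Hode c ltac:(lra)). lra.
      - left. apply Rinv_0_lt_compat. nra. }
    nra. }
  destruct (Rle_or_lt 1 (hh a (F t) / t)) as [Hk|Hk].
  - apply Rmult_le_compat_r with (r := t) in Hk; [|lra].
    unfold Rdiv in Hk. rewrite Rmult_assoc, Rinv_l, Rmult_1_r, Rmult_1_l in Hk by lra. lra.
  - exfalso. destruct (hh_lim0 a F dF H0 H1 (Hd 0 ltac:(lra)) (1 - hh a (F t) / t) ltac:(lra)) as [del [Hdel Hl]].
    set (u := Rmin del t / 2).
    assert (Hu : 0 < u < t /\ u < del).
    { unfold u. pose proof (Rmin_l del t). pose proof (Rmin_r del t).
      assert (0 < Rmin del t) by (apply Rmin_glb_lt; lra). lra. }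
    specialize (Hl u ltac:(lra)). specialize (Hm u ltac:(lra)).
    apply Rabs_def2 in Hl. lra.
Qed.

Lemma hh_incr a w1 w2 : 0 < a -> 0 <= w1 < w2 -> w2 <= / (a+1) -> hh a w1 < hh a w2.
Proof.
  intros Ha Hw H2.
  assert (Hwm : / (a+1) < 1). { rewrite <- Rinv_1. apply Rinv_lt_contravar; lra. }
  destruct (MVT_cor2 (hh a) (fun w => Rpower (1 - w) (a - 1) * (1 - (a+1) * w)) w1 w2) as [c [Hc1 Hc2]].
  - lra.
  - intros c Hc. apply is_derive_Reals, hh_der. lra.
  - assert (0 < 1 - (a+1) * c).
    { assert ((a+1) * c < (a+1) * / (a+1)) by (apply Rmult_lt_compat_l; lra).
      rewrite Rinv_r in H by lra. lra. }
    pose proof (Rpower_pos (1 - c) (a - 1)). 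
    assert (0 < Rpower (1 - c) (a - 1) * (1 - (a + 1) * c) * (w2 - w1)).
    { apply Rmult_lt_0_compat; [apply Rmult_lt_0_compat|]; lra. }
    lra.
Qed.

Lemma hh_le_max a w : 0 < a -> 0 <= w < 1 -> hh a w <= hh a (/ (a+1)).
Proof.
  intros Ha Hw.
  assert (Hwm : 0 < / (a+1) < 1). { split. apply Rinv_0_lt_compat; lra. rewrite <- Rinv_1. apply Rinv_lt_contravar; lra. }
  destruct (Rle_or_lt w (/ (a+1))) as [H|H].
  - destruct H as [H|H]; [left; apply hh_incr; lra| subst; lra].
  - destruct (MVT_cor2 (hh a) (fun w => Rpower (1 - w) (a - 1) * (1 - (a+1) * w)) (/ (a+1)) w) as [c [Hc1 Hc2]].
    + lra.
    + intros c Hc. apply is_derive_Reals, hh_der. lra.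
    + assert (1 - (a+1) * c < 0).
      { assert ((a+1) * / (a+1) < (a+1) * c) by (apply Rmult_lt_compat_l; lra).
        rewrite Rinv_r in H0 by lra. lra. }
      pose proof (Rpower_pos (1 - c) (a - 1)).
      assert (Rpower (1 - c) (a - 1) * (1 - (a + 1) * c) * (w - / (a+1)) < 0).
      { apply Rmult_neg_pos; [|lra]. apply Rmult_pos_neg; lra. }
      lra.
Qed.

Lemma der_cont (F dF : R -> R) (x : R) : is_derive F x (dF x) -> continuity_pt F x.
Proof.
  intros H. apply continuity_pt_filterlim. apply (ex_derive_continuous (K:=R_AbsRing) (V:=R_NormedModule)). exists (dF x). exact H.
Qed.

Lemma branch a F dF b : 0 < a -> 0 < b <= hh a (/ (a+1)) ->
  (forall u, 0 <= u < b -> is_derive F u (dF u)) ->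
  F 0 = 0 -> dF 0 = 1 ->
  (forall u v, 0 <= u <= v -> v < b -> F u <= F v) ->
  (forall u, 0 < u < b -> u * dF u * (1 - (a+1) * F u) <= F u * (1 - F u)) ->
  forall t, 0 <= t < b -> F t < / (a+1) /\ hh a (F t) <= t.
Proof.
  intros Ha Hb Hd H0 H1 Hmono Hode.
  assert (Hwm : 0 < / (a+1) < 1). { split. apply Rinv_0_lt_compat; lra. rewrite <- Rinv_1. apply Rinv_lt_contravar; lra. }
  assert (Hlt : forall t, 0 <= t < b -> F t < / (a+1)).
  { intros t Ht. destruct (Rlt_or_le (F t) (/ (a+1))) as [H|H]; auto. exfalso.
    assert (Ht0 : 0 < t). { destruct (Req_dec t 0); [subst; lra| lra]. }
    assert (Hex : exists t2, 0 < t2 <= t /\ F t2 = / (a+1)).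
    { destruct H as [H|H].
      - destruct (Ranalysis5.IVT_interv (fun u => F u - / (a+1)) 0 t) as [z [Hz1 Hz2]].
        + intros u Hu. apply continuity_pt_minus. apply (der_cont F dF), Hd; lra. apply continuity_pt_const. intros ? ?; auto.
        + lra.
        + lra.
        + lra.
        + exists z. split; [|lra]. destruct (Req_dec z 0); [subst; lra| lra].
      - exists t. split; lra. }
    destruct Hex as [t2 [Ht2 HF2]].
    assert (Hk : hh a (F t2) <= t2).
    { apply (key_le a F dF t2); try lra.
      - intros u Hu; apply Hd; lra.
      - intros u Hu. pose proof (Hmono u t2 ltac:(lra) ltac:(lra)). lra.
      - intros u Hu; apply Hode; lra. }
    rewrite HF2 in Hk. lra. }
  intros t Ht. split. apply Hlt; auto.
  destruct (Req_dec t 0) as [E|E].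
  - subst. rewrite H0. unfold hh. lra.
  - apply (key_le a F dF t); try lra.
    + intros u Hu; apply Hd; lra.
    + intros u Hu. pose proof (Hmono u t ltac:(lra) ltac:(lra)). pose proof (Hlt t Ht). lra.
    + intros u Hu; apply Hode; lra.
Qed.

Lemma exps_series (b : nat -> R) x : ex_pseries b x -> ex_series (fun n => b n * x ^ n).
Proof.
  intros H. eapply ex_series_ext; [|exact H]. intros n. simpl. rewrite pow_n_pow.
  change (scal (x ^ n) (b n)) with (x ^ n * b n). ring.
Qed.

Lemma ex_series_Rscal c (a : nat -> R) : ex_series a -> ex_series (fun n => c * a n).
Proof. intros H. apply (ex_series_scal_l c a) in H. exact H. Qed.

Lemma CV_radius_mono (b v : nat -> R) : (forall r, CV_disk b r -> CV_disk v r) ->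
  Rbar_le (CV_radius b) (CV_radius v).
Proof.
  intros H. unfold CV_radius.
  destruct (Lub_Rbar_correct (CV_disk b)) as [_ Hb].
  destruct (Lub_Rbar_correct (CV_disk v)) as [Hv _].
  apply Hb. intros r Hr. apply Hv, H, Hr.
Qed.

Lemma rad_dom (b v : nat -> R) K : (forall n, Rabs (v n) <= K * (INR n + 1) * Rabs (b n)) ->
  Rbar_le (CV_radius b) (CV_radius v).
Proof.
  intros Hd.
  rewrite <- (CV_radius_incr_1 b), <- CV_radius_derive.
  apply CV_radius_mono. intros r Hr. unfold CV_disk in *.
  apply (ex_series_le (K:=R_AbsRing) (V:=R_CompleteNormedModule) _ (fun n => K * Rabs (PS_derive (PS_incr_1 b) n * r ^ n))).
  - intros n. change (norm (Rabs (v n * r ^ n))) with (Rabs (Rabs (v n * r ^ n))).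
    rewrite Rabs_Rabsolu. unfold PS_derive. simpl PS_incr_1.
    rewrite !Rabs_mult, S_INR. rewrite (Rabs_pos_eq (INR n + 1)) by (pose proof (pos_INR n); lra).
    pose proof (Rabs_pos (r ^ n)). specialize (Hd n). nra.
  - apply (ex_series_scal_l K) in Hr. exact Hr.
Qed.

Lemma inside_ex (b : nat -> R) t : Rbar_lt (Rabs t) (CV_radius b) -> ex_series (fun n => b n * t ^ n).
Proof. intros H. apply exps_series, CV_radius_inside, H. Qed.

Lemma ode_pseries (b : nat -> R) s t : b 0%nat = 0 -> Rbar_lt (Rabs t) (CV_radius b) ->
  t * PSeries (PS_derive b) t * (1 - s * PSeries b t) - PSeries b t * (1 - PSeries b t)
  = PSeries (fun n => (INR n - 1) * b n - PS_mult b (fun k => (s * INR k - 1) * b k) n) t.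
Proof.
  intros Hb0 Ht.
  set (db := fun n => INR n * b n).
  assert (Hdb : t * PSeries (PS_derive b) t = PSeries db t).
  { rewrite <- PSeries_incr_1. apply PSeries_ext. intros [|n]; simpl.
    - unfold db. rewrite Hb0, Rmult_0_r. reflexivity.
    - unfold db, PS_derive. reflexivity. }
  assert (Rdb : Rbar_le (CV_radius b) (CV_radius db)).
  { apply (rad_dom b db 1). intros n. unfold db. rewrite Rabs_mult, Rabs_pos_eq by apply pos_INR. pose proof (Rabs_pos (b n)); pose proof (pos_INR n); nra. }
  set (v := fun k => (s * INR k - 1) * b k).
  assert (Rv : Rbar_le (CV_radius b) (CV_radius v)).
  { apply (rad_dom b v (Rabs s + 1)). intros n. unfold v. rewrite Rabs_mult.
    apply Rmult_le_compat_r. apply Rabs_pos.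
    pose proof (pos_INR n). eapply Rle_trans. apply Rabs_triang. rewrite Rabs_Ropp, Rabs_R1, Rabs_mult, (Rabs_pos_eq (INR n)) by lra.
    pose proof (Rabs_pos s). nra. }
  assert (Htv : Rbar_lt (Rabs t) (CV_radius v)) by exact (Rbar_lt_le_trans _ _ _ Ht Rv).
  assert (Htd : Rbar_lt (Rabs t) (CV_radius db)) by exact (Rbar_lt_le_trans _ _ _ Ht Rdb).
  assert (Hv : PSeries v t = s * PSeries db t - PSeries b t).
  { unfold PSeries. rewrite <- Series_scal_l, <- Series_minus.
    - apply Series_ext. intros n. unfold v, db. ring.
    - apply ex_series_Rscal. apply inside_ex; auto.
    - apply inside_ex; auto. }
  rewrite Hdb.
  replace (PSeries db t * (1 - s * PSeries b t) - PSeries b t * (1 - PSeries b t))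
    with ((PSeries db t - PSeries b t) - PSeries b t * (s * PSeries db t - PSeries b t)) by ring.
  rewrite <- Hv, <- PSeries_mult by auto.
  assert (E1 : ex_series (fun n => db n * t ^ n)) by (apply inside_ex; auto).
  assert (E2 : ex_series (fun n => b n * t ^ n)) by (apply inside_ex; auto).
  assert (E3 : ex_series (fun n => PS_mult b v n * t ^ n)) by (apply exps_series; apply ex_pseries_mult; auto).
  assert (E12 : ex_series (fun n => db n * t ^ n - b n * t ^ n)).
  { apply (ex_series_minus (V:=R_NormedModule)); auto. }
  unfold PSeries. rewrite <- !Series_minus by auto.
  apply Series_ext. intros n. unfold db, v. ring.
Qed.

Lemma ex_series_zero : ex_series (fun _ : nat => 0).
Proof.
  assert (H : Rbar_lt (Rabs 0) (CV_radius (fun _ => 0))) by (rewrite CV_radius_const_0; simpl; auto).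
  apply inside_ex in H. eapply ex_series_ext; [|exact H]. intros n; simpl; ring.
Qed.

Lemma ev_zero (u : nat -> R) N : (forall k, u (S N + k)%nat = 0) -> ex_series u.
Proof.
  intros H. apply (ex_series_incr_n u (S N)).
  eapply ex_series_ext; [|exact ex_series_zero]. intros k; rewrite H; auto.
Qed.

Lemma Series_ev_zero (u : nat -> R) N : (forall k, u (S N + k)%nat = 0) -> Series u = sum_f_R0 u N.
Proof.
  intros H. rewrite (Series_incr_n u (S N)) by (lia || (apply (ev_zero u N H))).
  rewrite (Series_ext _ (fun _ => 0)) by auto.
  rewrite (Series_ext _ (fun k => 0 * 0 ^ k)) by (intros; ring).
  change (Series (fun k => 0 * 0 ^ k)) with (PSeries (fun _ => 0) 0). rewrite PSeries_const_0.
  simpl. ring.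
Qed.

Lemma poch_pos c m : 0 < c -> 0 < poch c m.
Proof.
  intros Hc. induction m; simpl. lra. pose proof (pos_INR m). apply Rmult_lt_0_compat; lra.
Qed.

Lemma cf_nonneg a n : 0 < a -> 0 <= cf a n.
Proof.
  intros Ha. destruct n. simpl; lra. unfold cf. left. apply Rdiv_lt_0_compat.
  apply poch_pos. apply Rmult_lt_0_compat; auto. apply lt_0_INR; lia. apply INR_fact_pos.
Qed.

Lemma cf_1 a : cf a 1 = 1.
Proof. unfold cf. simpl. field. Qed.

Definition trunc a N n := if (n <=? N)%nat then cf a n else 0.

Lemma trunc_zero a N k : trunc a N (S N + k) = 0.
Proof. unfold trunc. destruct (Nat.leb_spec (S N + k) N); [lia|auto]. Qed.

Lemma trunc_rad a N t : Rbar_lt (Rabs t) (CV_radius (trunc a N)).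
Proof.
  assert (H : CV_disk (trunc a N) (Rabs t + 1)).
  { apply (ev_zero _ N). intros k. rewrite trunc_zero. rewrite Rmult_0_l, Rabs_R0. auto. }
  destruct (Lub_Rbar_correct (CV_disk (trunc a N))) as [Hub _].
  specialize (Hub _ H). fold (CV_radius (trunc a N)) in Hub.
  eapply Rbar_lt_le_trans; [|exact Hub]. simpl. lra.
Qed.

Lemma trunc_sum a N x : PSeries (trunc a N) x = sum_f_R0 (fun n => cf a n * x ^ n) N.
Proof.
  unfold PSeries. rewrite (Series_ev_zero _ N).
  - apply sum_eq. intros i Hi. unfold trunc. destruct (Nat.leb_spec i N); [auto|lia].
  - intros k. rewrite trunc_zero. ring.
Qed.

Lemma series_nonpos (u : nat -> R) : (forall n, u n <= 0) -> Series u <= 0.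
Proof.
  intros Hu. unfold Series.
  assert (H : Rbar_le (Lim_seq (sum_n u)) (Lim_seq (fun _ => 0))).
  { apply Lim_seq_le_loc. exists 0%nat. intros n _. rewrite sum_n_Reals.
    rewrite <- (sum_zero n). apply sum_Rle. intros; auto. }
  rewrite Lim_seq_const in H. destruct (Lim_seq (sum_n u)); simpl in *; lra.
Qed.

Lemma ps_mono (b : nat -> R) u v : (forall n, 0 <= b n) -> 0 <= u <= v ->
  ex_series (fun n => b n * v ^ n) -> PSeries b u <= PSeries b v.
Proof.
  intros Hb Huv Hv. apply Series_le; auto. intros n. split.
  - apply Rmult_le_pos; auto. apply pow_le; lra.
  - apply Rmult_le_compat_l; auto. apply pow_incr; lra.
Qed.

Definition ecoef a (b : nat -> R) n :=
  (INR n - 1) * b n - PS_mult b (fun k => ((a+1) * INR k - 1) * b k) n.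

Lemma ecoef_cf a n : ecoef a (cf a) n = 0.
Proof. unfold ecoef, PS_mult. rewrite ode_coef. ring. Qed.

Lemma trunc_nonneg a N n : 0 < a -> 0 <= trunc a N n.
Proof. intros Ha. unfold trunc. destruct (n <=? N)%nat; [apply cf_nonneg; auto| lra]. Qed.

Lemma ecoef_trunc a N n : 0 < a -> ecoef a (trunc a N) n <= 0.
Proof.
  intros Ha. destruct (Nat.leb_spec n N) as [Hn|Hn].
  - unfold ecoef, PS_mult.
    rewrite (sum_eq _ (fun k => cf a k * (((a+1) * INR (n - k) - 1) * cf a (n - k)))).
    + rewrite ode_coef. unfold trunc. destruct (Nat.leb_spec n N); [lra|lia].
    + intros k Hk. unfold trunc. destruct (Nat.leb_spec k N); [|lia].
      destruct (Nat.leb_spec (n - k) N); [auto|lia].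
  - unfold ecoef, PS_mult. unfold trunc at 1. destruct (Nat.leb_spec n N); [lia|].
    assert (0 <= sum_f_R0 (fun k => trunc a N k * (((a+1) * INR (n - k) - 1) * trunc a N (n - k))) n).
    { apply cond_pos_sum. intros k. apply Rmult_le_pos. apply trunc_nonneg; auto.
      destruct (n - k)%nat as [|j] eqn:E.
      - unfold trunc. simpl. lra.
      - apply Rmult_le_pos; [|apply trunc_nonneg; auto]. rewrite S_INR. pose proof (pos_INR j). nra. }
    lra.
Qed.

Lemma wm_bounds a : 0 < a -> 0 < / (a+1) < 1.
Proof. intros Ha. split. apply Rinv_0_lt_compat; lra. rewrite <- Rinv_1. apply Rinv_lt_contravar; lra. Qed.

Lemma Tm_pos a : 0 < a -> 0 < hh a (/ (a+1)).
Proof. intros Ha. pose proof (wm_bounds a Ha). unfold hh. apply Rmult_lt_0_compat. lra. apply Rpower_pos. Qed.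

Lemma ode_le_trunc a N t : 0 < a -> 0 <= t ->
  t * PSeries (PS_derive (trunc a N)) t * (1 - (a+1) * PSeries (trunc a N) t)
   <= PSeries (trunc a N) t * (1 - PSeries (trunc a N) t).
Proof.
  intros Ha Ht.
  assert (H := ode_pseries (trunc a N) (a+1) t eq_refl (trunc_rad a N t)).
  assert (PSeries (fun n => (INR n - 1) * trunc a N n - PS_mult (trunc a N) (fun k => ((a+1) * INR k - 1) * trunc a N k) n) t <= 0).
  { apply series_nonpos. intros n. pose proof (ecoef_trunc a N n Ha). unfold ecoef in H0.
    pose proof (pow_le t n Ht). nra. }
  lra.
Qed.

Lemma trunc_bound a N t : 0 < a -> 0 <= t < hh a (/ (a+1)) -> PSeries (trunc a N) t < / (a+1).
Proof.
  intros Ha Ht. pose proof (wm_bounds a Ha).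
  destruct N as [|N].
  - rewrite trunc_sum. simpl. lra.
  - apply (branch a (PSeries (trunc a (S N))) (PSeries (PS_derive (trunc a (S N)))) (hh a (/ (a+1)))); auto.
    + split; [apply Tm_pos; auto| lra].
    + intros u Hu. apply is_derive_PSeries, trunc_rad.
    + rewrite PSeries_0. reflexivity.
    + rewrite PSeries_0. unfold PS_derive, trunc. simpl Nat.leb. cbv iota. rewrite cf_1. simpl. ring.
    + intros u v Huv Hv. apply ps_mono; auto. intros; apply trunc_nonneg; auto. apply inside_ex, trunc_rad.
    + intros u Hu. apply ode_le_trunc; auto. lra.
Qed.

Lemma cont_le f T M : 0 < T -> continuity_pt f T -> (forall t, 0 <= t < T -> f t <= M) -> f T <= M.
Proof.
  intros HT Hc Hb. destruct (Rle_or_lt (f T) M) as [H|H]; auto. exfalso.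
  destruct (Hc (f T - M) ltac:(lra)) as [d [Hd Hx]].
  set (x := Rmax 0 (T - d/2)).
  assert (Hx1 : 0 <= x < T /\ Rabs (x - T) < d).
  { unfold x. unfold Rmax. destruct (Rle_dec 0 (T - d/2)).
    - split; [lra|]. rewrite Rabs_left by lra. lra.
    - split; [lra|]. rewrite Rabs_left by lra. lra. }
  specialize (Hx x). simpl in Hx. unfold R_dist in Hx.
  assert (Rabs (f x - f T) < f T - M). { apply Hx. split. split. constructor. lra. lra. }
  specialize (Hb x ltac:(lra)). apply Rabs_def2 in H0. lra.
Qed.

Lemma trunc_bound_T a N : 0 < a -> PSeries (trunc a N) (hh a (/ (a+1))) <= / (a+1).
Proof.
  intros Ha. apply cont_le. apply Tm_pos; auto. apply PSeries_continuity, trunc_rad.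
  intros t Ht. left. apply trunc_bound; auto.
Qed.

Lemma ex_at_T a : 0 < a -> ex_series (fun n => cf a n * (hh a (/ (a+1))) ^ n).
Proof.
  intros Ha. set (T := hh a (/ (a+1))). assert (HT := Tm_pos a Ha).
  destruct (ex_finite_lim_seq_incr (sum_n (fun n => cf a n * T ^ n)) (/ (a+1))) as [l Hl].
  - intros n. rewrite !sum_n_Reals, tech5.
    assert (0 <= cf a (S n) * T ^ S n) by (apply Rmult_le_pos; [apply cf_nonneg; auto| apply pow_le; unfold T; lra]).
    lra.
  - intros n. rewrite sum_n_Reals, <- trunc_sum. apply trunc_bound_T; auto.
  - exists l. exact Hl.
Qed.

Lemma series_nonneg (u : nat -> R) : (forall n, 0 <= u n) -> 0 <= Series u.
Proof.
  intros Hu. unfold Series.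
  assert (H : Rbar_le (Lim_seq (fun _ => 0)) (Lim_seq (sum_n u))).
  { apply Lim_seq_le_loc. exists 0%nat. intros n _. rewrite sum_n_Reals.
    rewrite <- (sum_zero n). apply sum_Rle. intros; auto. }
  rewrite Lim_seq_const in H. destruct (Lim_seq (sum_n u)); simpl in *; lra.
Qed.

Lemma S_nonneg a t : 0 < a -> 0 <= t -> 0 <= PSeries (cf a) t.
Proof.
  intros Ha Ht. apply series_nonneg. intros n. apply Rmult_le_pos. apply cf_nonneg; auto. apply pow_le; auto.
Qed.

Lemma rad_cf a : 0 < a -> Rbar_le (hh a (/ (a+1))) (CV_radius (cf a)).
Proof.
  intros Ha. assert (H : CV_disk (cf a) (hh a (/ (a+1)))).
  { unfold CV_disk. eapply ex_series_ext; [|apply (ex_at_T a Ha)]. intros n.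
    rewrite Rabs_pos_eq; auto. apply Rmult_le_pos. apply cf_nonneg; auto. apply pow_le. left; apply Tm_pos; auto. }
  destruct (Lub_Rbar_correct (CV_disk (cf a))) as [Hub _]. apply Hub, H.
Qed.

Lemma inside_cf a t : 0 < a -> 0 <= t < hh a (/ (a+1)) -> Rbar_lt (Rabs t) (CV_radius (cf a)).
Proof.
  intros Ha Ht. eapply Rbar_lt_le_trans; [|apply rad_cf; auto]. simpl. rewrite Rabs_pos_eq; lra.
Qed.

Lemma S_sol a t : 0 < a -> 0 <= t < hh a (/ (a+1)) ->
  PSeries (cf a) t < / (a+1) /\ hh a (PSeries (cf a) t) = t.
Proof.
  intros Ha Ht. pose proof (wm_bounds a Ha) as Hwb.
  set (F := PSeries (cf a)). set (dF := PSeries (PS_derive (cf a))).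
  assert (Hd : forall u, 0 <= u < hh a (/ (a+1)) -> is_derive F u (dF u)).
  { intros u Hu. apply is_derive_PSeries, inside_cf; auto. }
  assert (H0 : F 0 = 0). { unfold F. rewrite PSeries_0. reflexivity. }
  assert (H1 : dF 0 = 1). { unfold dF. rewrite PSeries_0. unfold PS_derive. rewrite cf_1. simpl. ring. }
  assert (Hm : forall u v, 0 <= u <= v -> v < hh a (/ (a+1)) -> F u <= F v).
  { intros u v Huv Hv. apply ps_mono; auto. intros; apply cf_nonneg; auto. apply inside_ex, inside_cf; auto; lra. }
  assert (Hode : forall u, 0 <= u < hh a (/ (a+1)) ->
     u * dF u * (1 - (a+1) * F u) = F u * (1 - F u)).
  { intros u Hu. pose proof (ode_pseries (cf a) (a+1) u eq_refl (inside_cf a u Ha Hu)) as H.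
    fold F dF in H. rewrite (PSeries_ext _ (fun _ => 0)) in H.
    - rewrite PSeries_const_0 in H. lra.
    - intros n. pose proof (ecoef_cf a n). unfold ecoef in H2. exact H2. }
  assert (Hb := branch a F dF (hh a (/ (a+1))) Ha (conj (Tm_pos a Ha) (Rle_refl _)) Hd H0 H1 Hm
                 (fun u Hu => Req_le _ _ (Hode u ltac:(lra)))).
  destruct (Hb t Ht) as [Hlt Hle]. split; auto.
  destruct (Req_dec t 0) as [E|E].
  - subst. rewrite H0. unfold hh. ring.
  - apply Rle_antisym; auto. apply Rge_le. apply (key_ge a F dF t); try lra.
    + intros u Hu; apply Hd; lra.
    + intros u Hu. destruct (Hb u ltac:(lra)). lra.
    + intros u Hu. right. apply Hode. lra.
Qed.

Lemma hh_nonneg a w : 0 <= w -> 0 <= hh a w.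
Proof. intros. unfold hh. apply Rmult_le_pos; auto. left; apply Rpower_pos. Qed.

Lemma S_T a : 0 < a -> PSeries (cf a) (hh a (/ (a+1))) = / (a+1).
Proof.
  intros Ha. pose proof (wm_bounds a Ha) as Hwb. set (T := hh a (/ (a+1))). assert (HT := Tm_pos a Ha).
  fold T in HT.
  assert (Hex := ex_at_T a Ha). fold T in Hex.
  assert (Hle : PSeries (cf a) T <= / (a+1)).
  { unfold PSeries. apply Series_correct in Hex.
    assert (Hb : forall n, sum_n (fun n => cf a n * T ^ n) n <= / (a+1)).
    { intros n. rewrite sum_n_Reals, <- trunc_sum. apply trunc_bound_T; auto. }
    pose proof (is_lim_seq_le _ (fun _ => / (a+1)) (Series (fun n => cf a n * T ^ n)) (/ (a+1)) Hb Hex (is_lim_seq_const _)) as Hr.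
    simpl in Hr. exact Hr. }
  assert (Hmt : forall t, 0 <= t < T -> PSeries (cf a) t <= PSeries (cf a) T).
  { intros t Ht. apply ps_mono; auto. intros; apply cf_nonneg; auto. lra. }
  assert (H0 : 0 <= PSeries (cf a) T).
  { apply S_nonneg; auto; lra. }
  destruct Hle as [Hlt|]; auto. exfalso.
  assert (Hh : hh a (PSeries (cf a) T) < T) by (apply hh_incr; auto; lra).
  set (t := (hh a (PSeries (cf a) T) + T) / 2).
  pose proof (hh_nonneg a _ H0).
  assert (Ht : 0 <= t < T) by (unfold t; lra).
  destruct (S_sol a t Ha Ht) as [_ Heq].
  pose proof (Hmt t Ht) as H2.
  assert (hh a (PSeries (cf a) t) <= hh a (PSeries (cf a) T)).
  { destruct H2 as [H2|H2]. left; apply hh_incr; auto; try lra.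
    split; auto. apply S_nonneg; auto; lra.
    rewrite H2; lra. }
  assert (t > hh a (PSeries (cf a) T)) by (unfold t; lra). lra.
Qed.

Lemma S_all a t : 0 < a -> 0 <= t <= hh a (/ (a+1)) ->
  0 <= PSeries (cf a) t <= / (a+1) /\ hh a (PSeries (cf a) t) = t /\
  ex_series (fun n => cf a n * t ^ n).
Proof.
  intros Ha Ht. destruct (Req_dec t (hh a (/ (a+1)))) as [E|E].
  - subst t. rewrite S_T by auto. pose proof (wm_bounds a Ha).
    split; [lra|]. split; auto. apply ex_at_T; auto.
  - destruct (S_sol a t Ha ltac:(lra)) as [H1 H2]. split; [split; [apply S_nonneg; lra| lra]|].
    split; auto. apply inside_ex, inside_cf; auto; lra.
Qed.

Lemma phi_pos a y : 0 < y -> phi a y = hh a (1 - y).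
Proof.
  intros Hy. unfold phi, rpow, hh. destruct (Req_EM_T y 0) as [E|E]; [lra|].
  replace (1 - (1 - y)) with y by ring.
  rewrite (Rpower_pred y (a+1)) by auto. replace (a + 1 - 1) with a by ring. ring.
Qed.

Lemma x0_eq a : 0 < a -> x0 a = 1 - / (a+1).
Proof. intros Ha. unfold x0. field. lra. Qed.

Lemma hh_inj a w1 w2 : 0 < a -> 0 <= w1 <= / (a+1) -> 0 <= w2 <= / (a+1) -> hh a w1 = hh a w2 -> w1 = w2.
Proof.
  intros Ha H1 H2 E. destruct (Rtotal_order w1 w2) as [L|[L|L]]; auto.
  - pose proof (hh_incr a w1 w2 Ha ltac:(lra) ltac:(lra)). lra.
  - pose proof (hh_incr a w2 w1 Ha ltac:(lra) ltac:(lra)). lra.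
Qed.

Theorem proposition2 (a x : R) (ha : 0 < a) (hx : 0 <= x <= 1) :
  ex_series (fun k => Rabs (term a x (S k))) /\
  1 - Series (fun k => term a x (S k)) = g_a a x /\
  (x <= x0 a -> 1 - Series (fun k => term a x (S k)) = f_a a x) /\
  (x0 a <= x -> 1 - Series (fun k => term a x (S k)) = x).
Proof.
  pose proof (wm_bounds a ha) as Hwb.
  set (u := rpow x a * (1 - x)).
  assert (Hu : 0 <= u <= hh a (/ (a+1)) /\ phi a x = u).
  { unfold u, rpow. destruct (Req_EM_T x 0) as [E|E].
    - subst. unfold phi, rpow. destruct (Req_EM_T 0 0); [|lra].
      pose proof (Tm_pos a ha). split; [lra|ring].
    - assert (Hx : 0 < x) by lra. rewrite phi_pos by auto.
      replace (Rpower x a * (1 - x)) with (hh a (1 - x)).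
      + split; auto. split. apply hh_nonneg; lra. apply hh_le_max; lra.
      + unfold hh. replace (1 - (1 - x)) with x by ring. ring. }
  destruct Hu as [Hu Hphi].
  destruct (S_all a u ha Hu) as [Hw [Hhw Hex]].
  set (w := PSeries (cf a) u) in *.
  assert (Hterm : forall k, term a x (S k) = cf a (S k) * u ^ (S k)).
  { intros k. unfold term, cf. replace (S k - 1)%nat with k by lia. fold u. unfold Rdiv. ring. }
  assert (Hser : Series (fun k => term a x (S k)) = w).
  { rewrite (Series_ext _ (fun k => cf a (S k) * u ^ (S k))) by auto.
    unfold w, PSeries. symmetry. apply Series_incr_1_aux. simpl. ring. }
  assert (Huniq : forall y, x0 a <= y <= 1 -> phi a y = u -> y = 1 - w).
  { intros y Hy Hpy. rewrite x0_eq in Hy by auto.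
    rewrite phi_pos in Hpy by lra.
    assert (1 - y = w). { apply (hh_inj a); try lra. }
    lra. }
  assert (Hg : g_a a x = 1 - w).
  { unfold g_a, r_inv. rewrite Hphi.
    assert (Hsp : exists y, x0 a <= y <= 1 /\ phi a y = u).
    { exists (1 - w). rewrite x0_eq by auto. split. lra. rewrite phi_pos by lra.
      replace (1 - (1 - w)) with w by ring. auto. }
    destruct (epsilon_spec (inhabits 0) (fun y => x0 a <= y <= 1 /\ phi a y = u) Hsp) as [H1 H2].
    apply Huniq; auto. }
  split; [|split; [|split]].
  - apply ex_series_incr_1 in Hex. eapply ex_series_ext; [|exact Hex].
    intros n. simpl. rewrite Hterm. rewrite Rabs_pos_eq. reflexivity.
    apply Rmult_le_pos. apply cf_nonneg; auto. apply pow_le. lra.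
  - rewrite Hser, Hg. reflexivity.
  - intros Hx0. unfold f_a. destruct (Rle_dec x (x0 a)) as [_|N]; [|lra].
    rewrite Hser. fold (g_a a x). rewrite Hg. reflexivity.
  - intros Hx0. rewrite Hser. symmetry. apply Huniq; auto. lra.
Qed.
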